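(* Let $(X,\mathcal{A})$ be a cross resolvable design with $v$ points, $b$ blocks of size $k$, $r$ parallel classes and $b_r=b/r$ blocks per parallel class, and let $z\in\{2,\dots,r\}$ be such that $\mu_z$ exists. Consider the multi-access coded caching scheme built from it (described in the context). Then for every point $x\in X$, the number of users having access to subfile index $x$ (i.e., users $U_H$ with $x\in\bigcup_{B\in H}B$) is exactly $\binom{r}{z}\left(b_r^z-(b_r-1)^z\right)$.
   Context: A resolvable design $(X,\mathcal{A})$: $X$ a finite set of $v$ points, $\mathcal{A}$ a collection of $b$ blocks (subsets of $X$) each of size $k$, partitioned into $r$ parallel classes, each parallel class being a set of $b_r=b/r=v/k$ pairwise disjoint blocks whose union is $X$. The $z$-th cross intersection number $\mu_z$ exists if $|B_1\cap\cdots\cap B_z|$ equals the same nonzero value $\mu_z$ for every choice of blocks from $z$ distinct parallel classes; the design is cross resolvable if some $\mu_i$, $i\in\{2,\dots,r\}$, exists. Multi-access scheme: there are $b$ caches, one for each block; there are $K=\binom{r}{z}b_r^z$ users $U_H$, one for each set $H$ of $z$ blocks taken from $z$ distinct parallel classes, and user $U_H$ is connected to the $z$ caches corresponding to the blocks in $H$. Each of $N$ files $W_i$ is split into $v$ equal subfiles $W_{i,x}$, $x\in X$, and the cache of block $A_j$ stores $W_{i,x}$ for all $x\in A_j$ and all $i\in[N]$. A user has access to subfile index $x$ if $x$ lies in one of the blocks of the caches it is connected to. *)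

(* Defs.v *)
From mathcomp Require Import all_boot.
Set Implicit Arguments. Unset Strict Implicit. Unset Printing Implicit Defensive.

(* A block is identified by its label (i, j) : 'I_r * 'I_br (the b = r*br caches). *)

Definition resolvable (X : finType) (r br k : nat) (B : 'I_r -> 'I_br -> {set X}) : Prop :=
  [/\ forall i j, #|B i j| = k,
      forall i j j', j != j' -> [disjoint B i j & B i j'] &
      forall i, \bigcup_(j < br) B i j = [set: X]].

(* H is a set of z blocks taken from z distinct parallel classes
   (these index the users U_H). *)
Definition user_set (r br z : nat) (H : {set 'I_r * 'I_br}) : bool :=
  (#|H| == z) && [forall p in H, forall q in H, (p.1 == q.1) ==> (p == q)].

Definition cross_mu_exists (X : finType) (r br z : nat) (B : 'I_r -> 'I_br -> {set X}) : Prop :=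
  exists mu : nat, 0 < mu /\
    forall H : {set 'I_r * 'I_br}, user_set z H ->
      #|\bigcap_(p in H) B p.1 p.2| = mu.

Definition has_access (X : finType) (r br : nat) (B : 'I_r -> 'I_br -> {set X})
  (H : {set 'I_r * 'I_br}) (x : X) : bool :=
  x \in \bigcup_(p in H) B p.1 p.2.

(* Main.v *)
Require Import Defs.
From mathcomp Require Import all_boot.

Lemma foldr_nseq n m : foldr muln 1 (nseq n m) = m ^ n.
Proof. by elim: n => //= n ->; rewrite expnS. Qed.

Lemma map_cst (T : Type) (s : seq T) (m : nat) : map (fun _ => m) s = nseq (size s) m.
Proof. by elim: s => //= a s ->. Qed.

Section C.
Variables (I J : finType) (j0 : J) (F : I -> {set J}) (z m : nat).
Hypothesis hF : forall i, #|F i| = m.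

Definition inj1 (H : {set I * J}) := [forall p in H, forall q in H, (p.1 == q.1) ==> (p == q)].

Lemma count_users :
 #|[set H : {set I * J} | [&& #|H| == z, inj1 H & [forall p in H, p.2 \in F p.1]]]|
   = 'C(#|I|, z) * m ^ z.
Proof.
pose P := [set p : {set I} * {ffun I -> J} | (#|p.1| == z) && (p.2 \in pfamily j0 p.1 F)].
pose phi (p : {set I} * {ffun I -> J}) := [set (i, p.2 i) | i in p.1].
have fst_phi p : [set q.1 | q in phi p] = p.1.
  apply/setP => i; apply/imsetP/idP => [[q /imsetP[i' Hi' ->] ->] //|Hi].
  by exists (i, p.2 i) => //; apply: imset_f.
have cphi p : #|phi p| = #|p.1|.
  by apply: card_imset => a b [].
have -> : [set H : {set I * J} | [&& #|H| == z, inj1 H & [forall p in H, p.2 \in F p.1]]]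
          = phi @: P.
  apply/setP => H; rewrite inE; apply/idP/imsetP.
  - case/and3P => /eqP cH /forall_inP Hi /forall_inP HF.
    pose S := [set q.1 | q in H].
    pose f := [ffun i => odflt j0 [pick j | (i, j) \in H]].
    have Hf q : q \in H -> f q.1 = q.2.
      move=> qH; rewrite /f ffunE; case: pickP => [j Hj /=|/(_ q.2)].
        by have /forall_inP/(_ _ Hj)/implyP/(_ (eqxx _))/eqP/(f_equal snd) := Hi q qH.
      by rewrite -surjective_pairing qH.
    exists (S, f).
      rewrite inE /=; apply/andP; split.
        rewrite card_in_imset ?cH //.
        move=> a b aH bH eab.
        by have /forall_inP/(_ _ bH)/implyP/(_ (introT eqP eab))/eqP := Hi a aH.
      apply/pfamilyP; split.
        apply/subsetP => i; rewrite inE /f ffunE; case: pickP => [j Hj _|_ /=]; last by rewrite eqxx.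
        by apply/imsetP; exists (i, j).
      move=> i /imsetP[q qH ->]; rewrite Hf //; exact: HF.
    apply/setP => q; apply/idP/imsetP => [qH|[i /imsetP[q' q'H ->] ->] /=].
      by exists q.1 => /=; [apply: imset_f|rewrite Hf // -surjective_pairing].
    by rewrite Hf // -surjective_pairing.
  - case=> [[S f]]; rewrite inE /= => /andP[/eqP cS /pfamilyP[_ fF]] ->.
    apply/and3P; split.
    + by rewrite cphi cS.
    + apply/forall_inP => a /imsetP[i _ ->]; apply/forall_inP => b /imsetP[i' _ ->].
      by apply/implyP => /= /eqP ->.
    + apply/forall_inP => a /imsetP[i iS ->] /=; exact: fF.
rewrite card_in_imset; last first.
  move=> [S f] [S' f']; rewrite !inE /= => /andP[_ /pfamilyP[sf _]] /andP[_ /pfamilyP[sf' _]] e.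
  have eS : S' = S by have := fst_phi (S, f); rewrite e fst_phi.
  subst S'; congr (_, _); apply/ffunP => i.
  case: (boolP (i \in S)) => iS.
    have : (i, f i) \in phi (S, f') by rewrite -e; apply: imset_f.
    by case/imsetP => i' _ [<- ->].
  have h g : j0.-support g \subset S -> g i = j0.
    move=> /subsetP/(_ i); rewrite inE; case: eqP => // _ /(_ isT).
    by rewrite (negbTE iS).
  by rewrite (h _ sf) (h _ sf').
rewrite -sum1_card.
transitivity (\sum_(p : {set I} * {ffun I -> J} | (#|p.1| == z) && (p.2 \in pfamily j0 p.1 F)) 1).
  by apply: eq_bigl => p; rewrite inE.
rewrite -(pair_big_dep (fun S : {set I} => #|S| == z) (fun (S : {set I}) (g : {ffun I -> J}) => g \in pfamily j0 S F) (fun _ _ => 1)) /=.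
rewrite (eq_bigr (fun _ => m ^ z)); last first.
  move=> S /eqP cS; rewrite sum1_card card_pfamily.
  have -> : [seq #|F x| | x in S] = nseq #|S| m.
    rewrite cardE -map_cst; apply: eq_map => x; exact: hF.
  by rewrite foldr_nseq cS.
rewrite sum_nat_const -card_draws; congr (_ * _); apply: eq_card => S; rewrite !inE; done.
Qed.
End C.

Theorem lemma2 (X : finType) (r br k z : nat) (B : 'I_r -> 'I_br -> {set X}) :
  resolvable k B ->
  2 <= z <= r ->
  cross_mu_exists z B ->
  forall x : X,
    #|[set H : {set 'I_r * 'I_br} | user_set z H && has_access B H x]|
    = 'C(r, z) * (br ^ z - (br - 1) ^ z).
Proof.
move=> [hk hdisj hcov] /andP[z2 zr] _ x.
have hc i : exists c, x \in B i c.
  have : x \in \bigcup_(j < br) B i j by rewrite hcov inE.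
  by case/bigcupP => j _ xj; exists j.
have r0 : 0 < r by apply: leq_trans zr; apply: leq_trans z2.
have [j0 _] := hc (Ordinal r0).
pose F2 (i : 'I_r) := [set j | x \notin B i j].
have cF2 i : #|F2 i| = br - 1.
  have [c xc] := hc i.
  have e : F2 i = ~: [set c].
    apply/setP => j; rewrite !inE; case: (eqVneq j c) => [->|jc]; first by rewrite xc.
    by rewrite (disjointFr (hdisj i c j _) xc) // eq_sym.
  rewrite e; move: (cardsC [set c]); rewrite cards1 card_ord.
  by move: #|~: _| => n hh; rewrite -[in RHS]hh addKn.
have cT (i : 'I_r) : #|[set: 'I_br]| = br by rewrite cardsT card_ord.
have h1 := @count_users 'I_r 'I_br j0 (fun _ => [set: 'I_br]) z br cT.
have h2 := @count_users 'I_r 'I_br j0 F2 z (br - 1) cF2.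
rewrite card_ord in h1 h2.
rewrite mulnBr -h1 -h2.
set T1 := [set H | _] in h1 *.
set T2 := [set H | _] in h2 *.
have sub : T2 \subset T1.
  apply/subsetP => H; rewrite !inE => /and3P[-> -> _] /=.
  by apply/forall_inP => p _; rewrite inE.
rewrite -(setIidPr sub) -cardsD.
apply: eq_card => H; rewrite !inE /user_set /has_access /inj1.
case: (#|H| == z) => //=; case: [forall p in H, _] => //=.
apply/bigcupP/idP.
  case=> p pH xp; apply/andP; split.
    by apply/negP => /forall_inP/(_ p pH); rewrite inE xp.
  by apply/forall_inP => q _; rewrite inE.
case/andP => /forall_inPn [p pH]; rewrite inE negbK => xp.
by exists p.
Qed.
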